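(* Let $n \in \mathbb{N}_0$ and let $P(x) \in \mathbb{Z}[x]$ be a monic $n$-good polynomial of even degree. If $P(x) = A(x^2) - xB(x^2)$ for some $A(x), B(x) \in \mathbb{Z}[x]$, then $2^n$ divides $B(x)$ in $\mathbb{Z}[x]$.
   Context: For $P, Q, M \in \mathbb{Z}[x]$ with $M \ne 0$, $P \equiv Q \pmod{M}$ means $M$ divides $P - Q$ in $\mathbb{Z}[x]$. For $n \in \mathbb{N}_0$, a polynomial $P(x) \in \mathbb{Z}[x]$ is $n$-good if $P(x^{2^m}) \equiv P(x)^{2^m} \pmod{2^{m+1}}$ for every $m \in \{0, 1, \dots, n\}$. *)

(* Defs.v *)
From mathcomp Require Import all_boot all_order all_algebra.
Set Implicit Arguments. Unset Strict Implicit. Unset Printing Implicit Defensive.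
Import GRing.Theory.
Local Open Scope ring_scope.

Definition zpoly_dvd (M P : {poly int}) : Prop := exists Q : {poly int}, P = M * Q.

Definition zpoly_cong (P Q M : {poly int}) : Prop := zpoly_dvd M (P - Q).

Definition n_good (n : nat) (P : {poly int}) : Prop :=
  forall m : nat, (m <= n)%N ->
    zpoly_cong (P \Po 'X^(2 ^ m)) (P ^+ (2 ^ m)) ((2 ^ m.+1)%N)%:R.

(* Main.v *)
Require Import Defs.
From mathcomp Require Import all_boot all_order all_algebra.
From mathcomp Require Import zify ring.
Import GRing.Theory.
Local Open Scope ring_scope.

Lemma dvdP (c : nat) (F : {poly int}) :
  zpoly_dvd c%:R F <-> forall i, ((c%:R : int) %| F`_i)%Z.
Proof.
split.
  move=> [Q ->] i; rewrite mulr_natl coefMn; apply/dvdzP; exists Q`_i; by rewrite mulr_natr.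
move=> H; have /polyOver_dvdzP [q ->] : F \is a polyOver (dvdz (c%:R)).
  by apply/polyOverP.
by exists q; rewrite scaler_nat mulr_natl.
Qed.

Lemma gauss (A B : {poly int}) (c : int) d : A`_d = 1 ->
  (forall i, (d < i)%N -> A`_i = 0) -> (forall j, (c %| (A*B)`_j)%Z) ->
  forall j, (c %| B`_j)%Z.
Proof.
move=> Ad Az H.
suff: forall k j, (size B <= j + k)%N -> (c %| B`_j)%Z.
  by move=> S j; apply: (S (size B) j); lia.
elim=> [|k IH] j Hj.
  by have -> : B`_j = 0 by apply: nth_default; rewrite addn0 in Hj.
have Hgt : forall j', (j < j')%N -> (c %| B`_j')%Z.
  by move=> j' Hj'; apply: IH; lia.
have := H (d + j)%N; rewrite coefM.
have Hd : (d < (d + j).+1)%N by lia.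
rewrite (bigD1 (Ordinal Hd)) //= Ad mul1r.
move=> Hs.
have Hr : (c %| \sum_(i < (d + j).+1 | i != Ordinal Hd) A`_i * B`_(d + j - i))%Z.
  apply: rpred_sum => i Hi.
  case: (ltngtP i d) => Hid.
  - apply: dvdz_mull; apply: Hgt; lia.
  - by rewrite Az ?mul0r ?rpred0.
  - by exfalso; move/eqP: Hi; apply; apply: val_inj.
have E : (d + j - d)%N = j by lia.
rewrite E in Hs.
move: Hr Hs; set S := \sum_(_ < _ | _) _ => Hr Hs.
have -> : B`_j = (B`_j + S) - S by ring.
by apply: rpredB.
Qed.

Lemma comp_dvd (c : nat) (F : {poly int}) m : (0 < m)%N ->
  zpoly_dvd c%:R (F \Po 'X^m) -> forall i, ((c%:R : int) %| F`_i)%Z.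
Proof.
move=> Hm /dvdP H i; have := H (i * m)%N.
by rewrite coef_comp_poly_Xn // dvdn_mull // mulnK.
Qed.

Theorem lemma3p7 (n : nat) (P A B : {poly int}) :
  P \is monic -> ~~ odd (size P).-1 -> n_good n P ->
  P = A \Po 'X^2 - 'X * (B \Po 'X^2) ->
  zpoly_dvd ((2 ^ n)%N)%:R B.
Proof.
move=> Hmon Hev Hg HP.
case: n Hg => [|k] Hg.
  by exists B; rewrite expn0 mulr1n mul1r.
have H0 := Hg k (leqnSn k); have H1 := Hg k.+1 (leqnn _).
have Ha : zpoly_dvd ((2 ^ k.+2)%N)%:R ((P ^+ 2 - (P \Po 'X^2)) \Po 'X^(2 ^ k)).
  case: H0 => Q0 E0; case: H1 => Q1 E1.
  rewrite comp_polyB -comp_polyA comp_Xn_poly expr2 comp_polyM -expr2 -exprM.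
  rewrite -[(2 ^ k * 2)%N]mulnC -expnS.
  set v := P \Po 'X^(2 ^ k); set w := P \Po 'X^(2 ^ k.+1).
  set u := P ^+ (2 ^ k).
  have Ev : v = u + ((2 ^ k.+1)%N)%:R * Q0 by rewrite -E0 addrC subrK.
  have Eu : P ^+ (2 ^ k.+1) = u ^+ 2 by rewrite expnS mulnC exprM.
  have Ew : w = u ^+ 2 + ((2 ^ k.+2)%N)%:R * Q1 by rewrite -Eu -E1 addrC subrK.
  set s : {poly int} := ((2 ^ k)%N)%:R.
  have E2 : ((2 ^ k.+1)%N)%:R = s * 2 :> {poly int} by rewrite expnS mulnC natrM.
  have E4 : ((2 ^ k.+2)%N)%:R = s * 4 :> {poly int} by rewrite !expnS mulnA mulnC natrM.
  exists (u * Q0 + s * Q0 ^+ 2 - Q1).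
  rewrite Ev Ew E2 E4; ring.
have Hpos : (0 < 2 ^ k)%N by rewrite expn_gt0.
have Hb := comp_dvd _ _ _ Hpos Ha.
have Hsq : P ^+ 2 = (A ^+ 2 + 'X * B ^+ 2) \Po 'X^2 - ('X * ((A * B) \Po 'X^2)) *+ 2.
  rewrite HP comp_polyD comp_polyM !expr2 !comp_polyM comp_polyX; ring.
have Hc : forall j, ((((2 ^ k.+1)%N)%:R : int) %| (A * B)`_j)%Z.
  move=> j; have := Hb (2 * j).+1.
  rewrite coefB Hsq coefB coefMn coefXM !coef_comp_poly_Xn //.
  have -> : (2 %| (2 * j).+1)%N = false by apply/negP; lia.
  rewrite /= (_ : (2 %| 2 * j)%N = true); last by apply/dvdn_mulr.
  rewrite mulKn // sub0r subr0 rpredN.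
  rewrite expnS mulnC natrM -mulr_natr.
  move=> h; rewrite -(@dvdz_mul2r 2) // mulr_natr; exact: h.
have HA : forall i, A`_i = P`_(2 * i).
  move=> i; rewrite HP coefB coef_comp_poly_Xn // coefXM.
  rewrite (_ : (2 %| 2 * i)%N = true); last by apply/dvdn_mulr.
  rewrite mulKn //; case: i => [|i] //=; first by rewrite subr0.
  rewrite coef_comp_poly_Xn //.
  have -> : (2 %| (2 * i.+1).-1)%N = false by apply/negP; lia.
  by rewrite subr0.
set d := (size P).-1./2.
have Hd : (2 * d = (size P).-1)%N by rewrite /d; lia.
have Ad : A`_d = 1.
  by rewrite HA Hd; move/monicP: Hmon; rewrite /lead_coef.
have Az : forall i, (d < i)%N -> A`_i = 0.
  move=> i Hi; rewrite HA nth_default //.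
  have : ((size P).-1 < 2 * i)%N by rewrite -Hd; lia.
  by move=> h; apply: leq_trans (leqSpred _) h.
apply/dvdP => j.
exact: (@gauss A B _ d Ad Az Hc j).
Qed.
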